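(* Let $n\ge 2$ be even, $K_n=(V,E)$ the complete graph, and $M_1,M_2$ perfect matchings in $K_n$. If the graph $(V,M_1\triangle M_2)$ has a single non-trivial connected component, then $\bm{c}=\chi(M_1)-\chi(M_2)$ is a circuit of the Perfect Matching polytope $P_{\mathrm{perfmatch}}(n)=\operatorname{conv}\{\chi(M): M\text{ a perfect matching in }K_n\}$, with circuits taken with respect to the linear description $$\bm{x}(\delta(S))\ge 1\ \text{for all } S\subset V,\ |S|\text{ odd},\ |S|\ge 3;\quad \bm{x}(\delta(v))=1\ \text{for all } v\in V;\quad \bm{x}\ge\bm{0}.$$
   Context: $\chi(M)\in\{0,1\}^E$ is the characteristic vector of $M$; $\triangle$ is symmetric difference; a non-trivial component has more than one node; $\delta(S)$ is the set of edges with exactly one endpoint in $S$, $\delta(v)=\delta(\{v\})$, $\bm{x}(F)=\sum_{e\in F}x_e$. Circuits: for a polytope $P=\{\bm{x}: A\bm{x}=\bm{b},\ B\bm{x}\le \bm{d}\}$ given by a fixed linear system, a nonzero vector $\bm{g}$ is a circuit of $P$ if $A\bm{g}=\bm{0}$ and $\operatorname{supp}(B\bm{g})$ is inclusion-minimal among the sets $\operatorname{supp}(B\bm{y})$ with $A\bm{y}=\bm{0}$, $\bm{y}\neq\bm{0}$. *)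

(* Defs.v *)
From mathcomp Require Import all_boot all_order all_algebra.
Set Implicit Arguments. Unset Strict Implicit. Unset Printing Implicit Defensive.
Import Order.TTheory GRing.Theory Num.Theory.
Local Open Scope ring_scope.

(* Edges of the complete graph K_n on V = 'I_n: 2-element subsets of V. *)
Definition edge (n : nat) := {e : {set 'I_n} | #|e| == 2%N}.

Definition cut (n : nat) (S : {set 'I_n}) : {set edge n} :=
  [set e : edge n | #|val e :&: S| == 1%N].

Definition star (n : nat) (v : 'I_n) : {set edge n} := cut [set v].

Definition perfect_matching (n : nat) (M : {set edge n}) : bool :=
  [forall v : 'I_n, #|[set e in M | v \in val e]| == 1%N].

Definition chi (R : nzRingType) (n : nat) (M : {set edge n}) : edge n -> R :=
  fun e => (e \in M)%:R.

Definition xsum (R : nzRingType) (n : nat) (x : edge n -> R) (F : {set edge n}) : R :=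
  \sum_(e in F) x e.

Definition oddset (n : nat) := {S : {set 'I_n} | odd #|S| && (3 <= #|S|)%N}.

(* rows of the inequality system B x <= d :
   inl T : -x(delta(T)) <= -1   ;   inr e : -x_e <= 0 *)
Definition ineq_row (n : nat) := (oddset n + edge n)%type.

Definition Aop (R : nzRingType) (n : nat) (x : edge n -> R) (v : 'I_n) : R :=
  xsum x (star v).

Definition Bop (R : nzRingType) (n : nat) (x : edge n -> R) (i : ineq_row n) : R :=
  match i with
  | inl T => - xsum x (cut (val T))
  | inr e => - x e
  end.

Definition in_kerA (R : nzRingType) (n : nat) (x : edge n -> R) : Prop :=
  forall v, Aop x v = 0.

Definition nonzero (R : nzRingType) (n : nat) (x : edge n -> R) : Prop :=
  exists e, x e != 0.

Definition suppB (R : nzRingType) (n : nat) (x : edge n -> R) : {set ineq_row n} :=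
  [set i | Bop x i != 0].

Definition is_circuit (R : nzRingType) (n : nat) (g : edge n -> R) : Prop :=
  nonzero g /\ in_kerA g /\
  forall y : edge n -> R, in_kerA y -> nonzero y ->
    suppB y \subset suppB g -> suppB y = suppB g.

Definition symdiff (T : finType) (A B : {set T}) : {set T} := (A :\: B) :|: (B :\: A).

Definition adj (n : nat) (F : {set edge n}) : rel 'I_n :=
  fun u v => [exists e in F, (u \in val e) && (v \in val e) && (u != v)].

Definition component (n : nat) (F : {set edge n}) (u : 'I_n) : {set 'I_n} :=
  [set w | connect (adj F) u w].

Definition single_nontrivial_component (n : nat) (F : {set edge n}) : Prop :=
  exists C : {set 'I_n},
    [/\ C \in [set component F u | u : 'I_n], (1 < #|C|)%N &
        forall D, D \in [set component F u | u : 'I_n] -> (1 < #|D|)%N -> D = C].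

(* Main.v *)
Require Import Defs.
From mathcomp Require Import all_boot all_order all_algebra.
Import Order.TTheory GRing.Theory Num.Theory.
Local Open Scope ring_scope.

Lemma in_star (n : nat) (v : 'I_n) (e : edge n) : (e \in star v) = (v \in val e).
Proof.
rewrite /star /cut inE; case: (boolP (v \in val e)) => H.
- have ->: val e :&: [set v] = [set v].
    by apply/setP => x; rewrite !inE; case: (x =P v) => [->|]; rewrite ?andbF ?andbT ?H.
  by rewrite cards1.
- have ->: val e :&: [set v] = set0.
    by apply/setP => x; rewrite !inE; case: (x =P v) => [->|]; rewrite ?andbF ?andbT ?(negbTE H).
  by rewrite cards0.
Qed.

Lemma pm_unique (n : nat) (M : {set edge n}) (hM : perfect_matching M) (v : 'I_n) :
  exists m, [/\ m \in M, v \in val m & forall e, e \in M -> v \in val e -> e = m].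
Proof.
move/forallP: hM => /(_ v) /cards1P [m Hm]; exists m.
have: m \in [set e in M | v \in val e] by rewrite Hm set11.
rewrite inE => /andP[a b]; split => // e eM ve.
have: e \in [set e in M | v \in val e] by rewrite inE eM ve.
by rewrite Hm inE => /eqP.
Qed.

Lemma sum_star (R : realFieldType) (n : nat) (M : {set edge n}) (hM : perfect_matching M) (v : 'I_n) :
  \sum_(e in star v) chi R M e = 1.
Proof.
have [m [mM vm mu]] := pm_unique _ _ hM v.
rewrite (bigD1 m) ?in_star //= big1 ?addr0 /chi ?mM //.
move=> e /andP[es ne]; case: (boolP (e \in M)) => eM //.
by rewrite in_star in es; move: ne; rewrite (mu e eM es) eqxx.
Qed.

Lemma g_cases (R : realFieldType) (n : nat) (M1 M2 : {set edge n}) (e : edge n) :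
  let g := chi R M1 e - chi R M2 e in
  (e \in symdiff M1 M2 -> g * g = 1 /\ g != 0) /\ (e \notin symdiff M1 M2 -> g = 0).
Proof.
rewrite /= /chi /symdiff !inE.
case: (e \in M1); case: (e \in M2) => /=; rewrite ?subrr ?subr0 ?sub0r; split => //;
  move=> _; rewrite ?mulr1 ?mulNr ?mulrN ?opprK ?mulr1 ?oppr_eq0 ?oner_eq0 //.
Qed.

Theorem corollary2 (R : realFieldType) (n : nat) (hn2 : (2 <= n)%N) (hne : ~~ odd n)
  (M1 M2 : {set edge n}) (h1 : perfect_matching M1) (h2 : perfect_matching M2)
  (hcomp : single_nontrivial_component (symdiff M1 M2)) :
  is_circuit (fun e => chi R M1 e - chi R M2 e).
Proof.
set F := symdiff M1 M2.
set g := (fun e => chi R M1 e - chi R M2 e).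
have gF : forall e, e \in F -> g e * g e = 1 /\ g e != 0 by move=> e; case: (g_cases R _ M1 M2 e).
have gnF : forall e, e \notin F -> g e = 0 by move=> e; case: (g_cases R _ M1 M2 e).
have kerg : in_kerA g.
  by move=> v; rewrite /Aop /xsum /g sumrB (sum_star _ _ _ h1) (sum_star _ _ _ h2) subrr.
case: hcomp => C [/imsetP [u _ ->] Cgt1 Cuniq].
have compe : forall e a b, e \in F -> val e = [set a; b] -> a != b ->
    component F a = component F u.
  move=> e a b eF ev ab; apply: Cuniq; first by apply: imset_f.
  apply/card_gt1P; exists a, b; split => //; rewrite inE ?connect0 //.
  apply: connect1; apply/existsP; exists e; rewrite eF ev !inE !eqxx /= orbT ab.
split.
split.
have [e00 e00F] : exists e, e \in F.
  case: (boolP [exists e, e \in F]) => [/existsP [e eF]|nF]; first by exists e.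
  exfalso; move: Cgt1; apply/negP; rewrite -leqNgt.
  have : component F u \subset [set u].
    apply/subsetP => w; rewrite !inE => /connectP [[|x p] /= pth ->] //.
    move: pth => /andP [/existsP [e /andP [eF _]] _].
    by move: nF; rewrite negb_exists => /forallP /(_ e); rewrite eF.
  by move/subset_leq_card; rewrite cards1.
  exists e00; by case: (gF e00 e00F).
split; first by [].
move=> y ky [e0 ye0] sub.
have yz : forall e, e \notin F -> y e = 0.
  move=> e eF; apply/eqP; apply: contraNT eF => ye.
  have : inr e \in suppB y by rewrite inE /= oppr_eq0.
  move/(subsetP sub); rewrite inE /= oppr_eq0.
  by apply: contraR => /gnF ->.
have e0F : e0 \in F by apply: contraNT ye0 => /yz ->.
set f := fun e => y e * g e.
have local : forall v e e', e \in F -> e' \in F -> v \in val e -> v \in val e' -> f e = f e'.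
  move=> v.
  have [m1 [m1M vm1 mu1]] := pm_unique _ _ h1 v.
  have [m2 [m2M vm2 mu2]] := pm_unique _ _ h2 v.
  suff H : forall e, e \in F -> v \in val e -> f e = y m1.
    by move=> e e' eF e'F ve ve'; rewrite (H e eF ve) (H e' e'F ve').
  move=> e eF ve.
  have [m1n2 m2n1] : m1 \notin M2 /\ m2 \notin M1.
    move: eF; rewrite /F /symdiff !inE => /orP [/andP [eM2 eM1]|/andP [eM1 eM2]].
      have ee := mu1 e eM1 ve; subst e.
      split => //; apply/negP => m2M1; have := mu1 m2 m2M1 vm2.
      by move=> ee; rewrite -ee m2M in eM2.
    have ee := mu2 e eM2 ve; subst e.
    split => //; apply/negP => m1M2; have := mu2 m1 m1M2 vm1.
    by move=> ee; rewrite -ee m1M in eM1.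
  have m12 : m1 != m2 by apply: contraNneq m1n2 => ->.
  have gm1 : g m1 = 1 by rewrite /g /chi m1M (negbTE m1n2) subr0.
  have gm2 : g m2 = -1 by rewrite /g /chi m2M (negbTE m2n1) sub0r.
  have hy : y m1 + y m2 = 0.
    have := ky v; rewrite /Aop /xsum (bigD1 m1) ?in_star //= (bigD1 m2) ?in_star ?vm2 1?eq_sym ?m12 //=.
    rewrite big1 ?addr0 ?addrA //.
    move=> e' /andP [/andP [e's e'1] e'2]; apply: yz.
    rewrite in_star in e's.
    have n1 : e' \notin M1.
      by apply/negP => e'M1; move: e'1; rewrite (mu1 e' e'M1 e's) eqxx.
    have n2 : e' \notin M2.
      by apply/negP => e'M2; move: e'2; rewrite (mu2 e' e'M2 e's) eqxx.
    by rewrite /F /symdiff !inE (negbTE n1) (negbTE n2).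
  move: eF; rewrite /F /symdiff !inE => /orP [/andP [eM2 eM1]|/andP [eM1 eM2]].
    by rewrite /f (mu1 e eM1 ve) gm1 mulr1.
  rewrite /f (mu2 e eM2 ve) gm2 mulrN1.
  by apply/eqP; rewrite eq_sym -addr_eq0 hy.
have P : forall p x, path (adj F) x p ->
    (forall e, e \in F -> x \in val e -> f e = f e0) ->
    forall e, e \in F -> last x p \in val e -> f e = f e0.
  elim => [|x' p IH] x //= /andP [/existsP [e1 /andP [e1F /andP [/andP [xe1 x'e1] _]]] pth] Px.
  apply: IH pth _ => e eF x'e.
  by rewrite (local x' e e1) // (Px e1 e1F xe1).
have /cards2P [a0 [b0 [ab0 ev0]]] := valP e0.
have fall : forall e, e \in F -> f e = f e0.
  move=> e eF; have /cards2P [a [b [ab ev]]] := valP e.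
  have ca := compe e a b eF ev ab; have c0 := compe e0 a0 b0 e0F ev0 ab0.
  have : a \in component F a0 by rewrite c0 -ca inE connect0.
  rewrite inE => /connectP [p pth la].
  apply: (P p a0 pth) => //.
    move=> e' e'F a0e'; apply: (local a0 e' e0) => //.
    by rewrite ev0 !inE eqxx.
  by rewrite -la ev !inE eqxx.
have hy : forall e, y e = f e0 * g e.
  move=> e; case: (boolP (e \in F)) => eF.
    by rewrite -(fall e eF) /f -mulrA (gF e eF).1 mulr1.
  by rewrite (yz e eF) (gnF e eF) mulr0.
have ha : f e0 != 0 by rewrite /f mulf_neq0 // (gF e0 e0F).2.
have hB : forall i, Bop y i = f e0 * Bop g i.
  case => [T|e] /=; last by rewrite hy mulrN.
  by rewrite /xsum (eq_bigr _ (fun e _ => hy e)) -mulr_sumr mulrN.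
by apply/setP => i; rewrite !inE hB mulf_eq0 negb_or ha.
Qed.
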